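(* Let $C=(1,c_2,c_3,c_4,c_5,c_6)=(1,c_2,2c_2-1,c_4,c_2+c_4-1,2c_4-1)$ be a system with $c_4\ge 3c_2-1$, and let $\ell=\lceil c_5/c_3\rceil$. Suppose $\mathrm{grd}_C(\ell c_3)=\ell c_3-c_5+1-\lfloor(\ell c_3-c_5)/c_2\rfloor(c_2-1)$ and $\mathrm{grd}_C(\ell c_3)\le\ell$. Then $C$ is canonical and the subsystem $(1,c_2,2c_2-1,c_4,c_2+c_4-1)$ is noncanonical.
   Context: A system is a tuple $C=(c_1,\dots,c_n)$ of integers with $1=c_1<c_2<\dots<c_n$; for $k\le n$, $(c_1,\dots,c_k)$ is a subsystem. For a positive integer $v$, $\mathrm{opt}_C(v)$ is the minimum of $\sum_i x_i$ over $x\in\mathbb{Z}_{\ge0}^n$ with $\sum_i c_ix_i=v$. The greedy representation of $v$ is produced by: for $i=n$ down to $1$, while $c_i\le$ remaining value, take a coin $c_i$. $\mathrm{grd}_C(v)$ is its number of coins. A positive integer $w$ is a counterexample if $\mathrm{opt}_C(w)<\mathrm{grd}_C(w)$; $C$ is canonical if it has none, noncanonical otherwise. *)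

(* Defs.v *)
From mathcomp Require Import all_boot.
Set Implicit Arguments. Unset Strict Implicit. Unset Printing Implicit Defensive.

Definition is_system (C : seq nat) : Prop :=
  head 0 C = 1 /\ sorted ltn C.

Definition is_repr (C : seq nat) (v : nat) (x : seq nat) : Prop :=
  size x = size C /\ \sum_(i < size C) nth 0 C i * nth 0 x i = v.

Definition is_opt (C : seq nat) (v m : nat) : Prop :=
  (exists x, is_repr C v x /\ sumn x = m) /\
  (forall x, is_repr C v x -> m <= sumn x).

(* Greedy on coins listed in decreasing order: with coin c, the loop
   "while c <= remaining, take a coin c" takes r %/ c coins and leaves r %% c. *)
Fixpoint grd_desc (D : seq nat) (r : nat) : nat :=
  match D with
  | [::] => 0
  | c :: D' => r %/ c + grd_desc D' (r %% c)
  end.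

Definition grd (C : seq nat) (v : nat) : nat := grd_desc (rev C) v.

Definition counterexample (C : seq nat) (w : nat) : Prop :=
  0 < w /\ exists m, is_opt C w m /\ m < grd C w.

Definition canonical (C : seq nat) : Prop :=
  forall w, ~ counterexample C w.

Definition noncanonical (C : seq nat) : Prop :=
  exists w, counterexample C w.

(* Main.v *)
Require Import Defs.
From mathcomp Require Import all_boot zify.
Set Warnings "-notation-overridden".

Lemma gskip D c r : r < c -> grd_desc (c :: D) r = grd_desc D r.
Proof. by move=> h; rewrite /= divn_small // modn_small. Qed.

Lemma gtake D c r : 0 < c -> c <= r -> grd_desc (c :: D) r = 1 + grd_desc (c :: D) (r - c).
Proof.
move=> c0 cr; rewrite /=.
rewrite -{1 2}(subnK cr) divnDr ?dvdnn // divnn c0 modnDr.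
lia.
Qed.

Section Key.
Variables A B p e : nat.
Hypothesis hA : 0 < A.
Hypothesis hB : B = p * A + e.
Hypothesis hpe : 2 * e + 1 <= p.
Hypothesis hBA : 2 * A < B.

Definition Ls := [:: (2*B).+1; (A+B).+1; B.+1; (2*A).+1; A.+1; 1].
Definition G w := grd_desc Ls w.

Lemma G0 : G 0 = 0.
Proof. by rewrite /G /= !div0n. Qed.

Ltac gs := rewrite ?gskip; try lia.

Lemma G6 w : (2*B).+1 <= w -> G w = 1 + G (w - (2*B).+1).
Proof. by move=> h; rewrite /G gtake. Qed.
Lemma G5 w : (A+B).+1 <= w < (2*B).+1 -> G w = 1 + G (w - (A+B).+1).
Proof. move=> /andP[h1 h2]; rewrite /G /Ls gskip // gtake // [in RHS]gskip //; lia. Qed.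
Lemma G4 w : B.+1 <= w < (A+B).+1 -> G w = 1 + G (w - B.+1).
Proof. move=> /andP[h1 h2]; rewrite /G /Ls gskip; last lia. rewrite gskip // gtake // [in RHS]gskip; last lia. by rewrite [in RHS]gskip; lia. Qed.
Lemma G3 w : (2*A).+1 <= w < B.+1 -> G w = 1 + G (w - (2*A).+1).
Proof. move=> /andP[h1 h2]; rewrite /G /Ls gskip; last lia. rewrite gskip; last lia. rewrite gskip // gtake // [in RHS]gskip; last lia. rewrite [in RHS]gskip; last lia. by rewrite [in RHS]gskip; lia. Qed.
Lemma G2 w : A.+1 <= w < (2*A).+1 -> G w = 1 + G (w - A.+1).
Proof. move=> /andP[h1 h2]; rewrite /G /Ls gskip; last lia. rewrite gskip; last lia. rewrite gskip; last lia. rewrite gskip // gtake // [in RHS]gskip; last lia. rewrite [in RHS]gskip; last lia. rewrite [in RHS]gskip; last lia. by rewrite [in RHS]gskip; lia. Qed.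
Lemma G1 w : 1 <= w < A.+1 -> G w = 1 + G (w - 1).
Proof. move=> /andP[h1 h2]; rewrite /G /Ls gskip; last lia. rewrite gskip; last lia. rewrite gskip; last lia. rewrite gskip; last lia. rewrite gskip // gtake // [in RHS]gskip; last lia. rewrite [in RHS]gskip; last lia. rewrite [in RHS]gskip; last lia. rewrite [in RHS]gskip; last lia. by rewrite [in RHS]gskip; lia. Qed.


Ltac tryw st k X Y :=
  apply: (st k.-1 X Y); rewrite ?mulSn ?mul0n ?addn0; lia.

Lemma key w : forall k x y, w = k + x * A + y * B -> x + y <= 2 * k -> G w <= k.
Proof.
elim/ltn_ind: w => w IHw k x.
elim/ltn_ind: x k => x IHx k y Hw Hxy.
case: (leqP p x) => Hpx.
  have Hek : e < k by lia.
  have HxA : (x - p) * A + p * A = x * A by rewrite -mulnDl subnK.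
  apply: (leq_trans (IHx (x - p) _ (k - e) (y + 1) _ _)); try lia.

have F1 : x * A + A + e <= B.
  have : x.+1 * A <= p * A by rewrite leq_mul2r Hpx orbT.
  rewrite mulSn; lia.
have step : forall c, 0 < c -> c <= w -> G w = 1 + G (w - c) ->
   forall k' x' y', k' < k -> w - c = k' + x' * A + y' * B -> x' + y' <= 2 * k' -> G w <= k.
  move=> c c0 cw -> k' x' y' hk he hxy.
  have := IHw (w - c) ltac:(lia) k' x' y' he hxy; lia.
case: (posnP w) => [->|w0]; first by rewrite G0.
have k0 : 0 < k.
  case: (posnP k) => // k0; have x0 : x = 0 by lia.
  have y0 : y = 0 by lia. by move: Hw; rewrite k0 x0 y0; lia.
move: Hw Hxy F1 step; case: x {IHx Hpx} => [|[|x]]; case: y => [|[|y]];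
  rewrite ?mulSn ?mul0n ?addn0 => Hw Hxy F1 step.
all: case: (leqP (2*B).+1 w) => r6; [ move: (step _ (ltn0Sn _) r6 (G6 _ r6)) => {}step
   | case: (leqP (A+B).+1 w) => r5; [ move: (step _ (ltn0Sn _) r5 (G5 _ (introT andP (conj r5 r6)))) => {}step
   | case: (leqP B.+1 w) => r4; [ move: (step _ (ltn0Sn _) r4 (G4 _ (introT andP (conj r4 r5)))) => {}step
   | case: (leqP (2*A).+1 w) => r3; [ move: (step _ (ltn0Sn _) r3 (G3 _ (introT andP (conj r3 r4)))) => {}step
   | case: (leqP A.+1 w) => r2; [ move: (step _ (ltn0Sn _) r2 (G2 _ (introT andP (conj r2 r3)))) => {}step
   | move: (step 1 isT w0 (G1 _ (introT andP (conj w0 r2)))) => {}step ]]]]].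
all: first [ lia
  | (eapply (step _ 0 0); [ | rewrite !mul0n !addn0; reflexivity | ]; lia)
  | first [ tryw step k (0) (0)
        | tryw step k (0) (1)
        | tryw step k (0) (y)
        | tryw step k (0) (y.+1)
        | tryw step k (0) (y.+2)
        | tryw step k (1) (0)
        | tryw step k (1) (1)
        | tryw step k (1) (y)
        | tryw step k (1) (y.+1)
        | tryw step k (1) (y.+2)
        | tryw step k (x) (0)
        | tryw step k (x) (1)
        | tryw step k (x) (y)
        | tryw step k (x) (y.+1)
        | tryw step k (x) (y.+2)
        | tryw step k (x.+1) (0)
        | tryw step k (x.+1) (1)
        | tryw step k (x.+1) (y)
        | tryw step k (x.+1) (y.+1)
        | tryw step k (x.+1) (y.+2)
        | tryw step k (x.+2) (0)
        | tryw step k (x.+2) (1)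
        | tryw step k (x.+2) (y)
        | tryw step k (x.+2) (y.+1)
        | tryw step k (x.+2) (y.+2) ] ].
Qed.
End Key.

Lemma grd_pos3 a3 a2 r : 0 < a3 -> 0 < a2 -> 0 < r -> 0 < grd_desc [:: a3; a2; 1] r.
Proof.
move=> h3 h2 hr.
case: (leqP a3 r) => H3; first by rewrite gtake.
rewrite gskip //; case: (leqP a2 r) => H2; first by rewrite gtake.
by rewrite gskip // gtake.
Qed.

Theorem lemma12 (c2 c4 : nat) :
  let c3 := 2 * c2 - 1 in
  let c5 := c2 + c4 - 1 in
  let c6 := 2 * c4 - 1 in
  let C := [:: 1; c2; c3; c4; c5; c6] in
  let l := (c5 + c3 - 1) %/ c3 in (* l = ceil (c5 / c3) *)
  is_system C ->
  3 * c2 - 1 <= c4 ->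
  grd C (l * c3) = (l * c3 - c5 + 1) - ((l * c3 - c5) %/ c2) * (c2 - 1) ->
  grd C (l * c3) <= l ->
  canonical C /\ noncanonical (take 5 C).
Proof.
move=> c3 c5 c6 C l; rewrite {}/l {}/C {}/c6 {}/c5 {}/c3.
move=> [_ Hs] H3.
move: Hs; rewrite /= => /andP[h1 /andP[h2 /andP[h3 _]]].
case: c2 h1 h2 h3 H3 => [//|A]; case: c4 => [|B]; first by lia.
move=> h1 h2 h3 H3.
have E3 : 2 * A.+1 - 1 = (2*A).+1 by lia.
have E5 : A.+1 + B.+1 - 1 = (A+B).+1 by lia.
have E6 : 2 * B.+1 - 1 = (2*B).+1 by lia.
rewrite E3 E5 E6 => Hg1 Hg2.
have hA : 0 < A by lia.
have hBA : 2 * A < B by lia.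
have hB3 : 3 * A < B by lia.
clear h1 h2 h3 H3 E3 E5 E6.
split.
- set l := (_ %/ _) in Hg1 Hg2.
  have hl : (A+B).+1 <= l * (2*A).+1.
    have := ltn_ceil ((A + B).+1 + (2 * A).+1 - 1) (ltn0Sn (2*A)).
    rewrite -/l; lia.
  clearbody l.
  have hr := divn_eq (l * (2 * A).+1 - (A + B).+1) A.+1.
  move: Hg1 Hg2 hr; set g := grd _ _.
  move: g ((l * (2 * A).+1 - (A + B).+1) %/ A.+1) ((l * (2 * A).+1 - (A + B).+1) %% A.+1) => g q s Hg1 Hg2 hr.
  have hqs : q + s + 1 <= l.
    have EA : A.+1 - 1 = A by lia. rewrite EA in Hg1. lia.
  set p := 2 * l - 1 - q.
  set e := l - 1 - q - s.
  have hp : p + 1 + q = 2 * l by lia.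
  have hpA : (p + 1 + q) * A = 2 * l * A by rewrite hp.
  have he : e + 1 + q + s = l by rewrite /e; lia.
  have hBe : B = p * A + e by clearbody p e; lia.
  have hpe : 2 * e + 1 <= p by rewrite /p /e; lia.
  clearbody p e. clear hr Hg1 Hg2 hqs hpA hp hl.
  move=> w [w0 [m [[[x [[Hsz Hsum] Hm]] _] Hlt]]].
  have HG : grd [:: 1; A.+1; (2 * A).+1; B.+1; (A + B).+1; (2 * B).+1] w = G A B w by [].
  rewrite HG in Hlt.
  move: Hsz Hsum Hm.
  case: x => [|x1 [|x2 [|x3 [|x4 [|x5 [|x6 [|]]]]]]] //= _.
  rewrite !big_ord_recl big_ord0 /= => Hsum Hm.
  have := @key A B p e hA hBe hpe hBA w m (x2 + 2 * x3 + x5) (x4 + x5 + 2 * x6).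
  clear HG; move=> K; have := K ltac:(lia) ltac:(lia); lia.
- clear Hg1 Hg2.
  exists (2 * B.+1); split; first by lia.
  exists 2; split; last first.
    have -> : grd [:: 1; A.+1; (2 * A).+1; B.+1; (A + B).+1] (2 * B.+1) =
       grd_desc [:: (A + B).+1; B.+1; (2 * A).+1; A.+1; 1] (2 * B.+1) by [].
    have E : grd_desc [:: (A + B).+1; B.+1; (2 * A).+1; A.+1; 1] (2 * B.+1) =
             2 + grd_desc [:: (2 * A).+1; A.+1; 1] (B - 3 * A).
      rewrite gtake //; last by lia.
      rewrite gskip; last by lia.
      rewrite gskip; last by lia.
      rewrite gtake //; last by lia.
      have -> : 2 * B.+1 - (A + B).+1 - (2 * A).+1 = B - 3 * A by lia.
      by [].
    rewrite E; have := @grd_pos3 (2 * A).+1 A.+1 (B - 3 * A) isT isT ltac:(lia); lia.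
  split.
    exists [:: 0; 0; 0; 2; 0]; split; last by [].
    split; first by [].
    rewrite !big_ord_recl big_ord0 /=; lia.
  move=> x [Hsz Hsum]; move: Hsz Hsum.
  case: x => [|x1 [|x2 [|x3 [|x4 [|x5 [|]]]]]] //= _.
  rewrite !big_ord_recl big_ord0 /= => Hsum.
  have b1 : 1 * x1 <= (A+B).+1 * x1 by apply: leq_mul; lia.
  have b2 : A.+1 * x2 <= (A+B).+1 * x2 by apply: leq_mul; lia.
  have b3 : (2 * A).+1 * x3 <= (A+B).+1 * x3 by apply: leq_mul; lia.
  have b4 : B.+1 * x4 <= (A+B).+1 * x4 by apply: leq_mul; lia.
  rewrite ltnNge; apply/negP => H.
  have : (A+B).+1 * (x1 + (x2 + (x3 + (x4 + (x5 + 0))))) <= (A+B).+1 * 1 by apply: leq_mul.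
  lia.
Qed.
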